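(* For all $r\ge2$ and $n\ge1$, $\ell^\ast(\mathcal{B}_{(r,n)};z)$ is $\gamma$-nonnegative: there are nonnegative numbers $\gamma_i$ with $\ell^\ast(\mathcal{B}_{(r,n)};z)=\sum_{i=0}^{\lfloor (n+1)/2\rfloor}\gamma_i z^i(1+z)^{n+1-2i}$.
   Context: For $r\ge2$, $n\ge1$, $\mathcal{B}_{(r,n)}:=\operatorname{conv}\bigl(e^{(1)},\ldots,e^{(n)},-\sum_{i=1}^n(r-1)r^{i-1}e^{(i)}\bigr)\subset\mathbb{R}^n$. For a lattice simplex $\Delta=\operatorname{conv}(v^{(0)},\ldots,v^{(d)})\subset\mathbb{R}^n$, $\ell^\ast(\Delta;z):=\sum_{x\in\Pi^\circ_\Delta\cap\mathbb{Z}^{n+1}}z^{x_{n+1}}$, where $\Pi^\circ_\Delta:=\{\sum_{i=0}^d\lambda_i(v^{(i)},1):0<\lambda_i<1\}$; for a $d$-simplex it is symmetric with respect to $d+1$. *)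

(* Defs.v *)
From HB Require Import structures.
From mathcomp Require Import all_boot all_order all_algebra.
Set Implicit Arguments. Unset Strict Implicit. Unset Printing Implicit Defensive.
Import Order.TTheory GRing.Theory Num.Theory.
Local Open Scope ring_scope.

Definition lift_pt (n : nat) (v : 'rV[int]_n) : 'rV[int]_(n.+1) :=
  \row_(j < n.+1) (if unlift ord_max j is Some j' then v 0 j' else 1).

(* x lies in the open parallelepiped
   Pi°_Delta = { sum_i lambda_i (v^(i),1) : 0 < lambda_i < 1 }
   of the lattice simplex Delta = conv(V 0, ..., V d) in R^n.
   (Coefficients lambda_i are taken rational; for lattice points of the
   parallelepiped of a simplex they are automatically rational.) *)
Definition in_open_pp (n d : nat) (V : 'I_d.+1 -> 'rV[int]_n)
    (x : 'rV[int]_(n.+1)) : Prop :=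
  exists lam : 'I_d.+1 -> rat,
    (forall i, 0 < lam i < 1) /\
    map_mx (fun a : int => a%:~R : rat) x =
      \sum_(i < d.+1) lam i *: map_mx (fun a : int => a%:~R : rat) (lift_pt (V i)).

(* p is ell^*(Delta; z): the set Pi°_Delta ∩ Z^{n+1} is finite, enumerated
   without repetition by s, and p = sum_{x in s} z^{x_{n+1}}. *)
Definition lstar_is (n d : nat) (V : 'I_d.+1 -> 'rV[int]_n) (p : {poly rat}) : Prop :=
  exists s : seq 'rV[int]_(n.+1),
    [/\ uniq s,
        (forall x, x \in s <-> in_open_pp V x),
        (forall x, x \in s -> 0 <= x 0 ord_max) &
        p = \sum_(x <- s) 'X^(absz (x 0 ord_max))].

Definition Bvert (r n : nat) (i : 'I_n.+1) : 'rV[int]_n :=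
  \row_(j < n) (if i == ord0 then - ((r - 1) * r ^ j)%:Z
                else ((i : nat) == j.+1)%:Z).

Definition gamma_nonneg (n : nat) (p : {poly rat}) : Prop :=
  exists gamma : 'I_((n.+1)./2).+1 -> rat,
    (forall i, 0 <= gamma i) /\
    p = \sum_(i < ((n.+1)./2).+1)
          gamma i *: ('X^i * (1 + 'X) ^+ (n.+1 - 2 * i)).

Arguments Bvert r n i : clear implicits.
Arguments gamma_nonneg n p : clear implicits.

(* Main.v *)
Require Import Defs.
From HB Require Import structures.
From mathcomp Require Import all_boot all_order all_algebra.
From mathcomp Require Import ring lra zify.
Set Implicit Arguments. Unset Strict Implicit. Unset Printing Implicit Defensive.
Import Order.TTheory GRing.Theory Num.Theory.
Local Open Scope ring_scope.

Definition gam (c : nat) (p : {poly rat}) : Prop :=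
  exists g : nat -> rat, (forall i, 0 <= g i) /\
    p = \sum_(i < (c./2).+1) g i *: ('X^i * (1 + 'X) ^+ (c - 2 * i)).

Lemma gam0 c : gam c 0.
Proof. exists (fun _ => 0); split => // ; by rewrite big1 // => i _; rewrite scale0r. Qed.

Lemma gamD c p q : gam c p -> gam c q -> gam c (p + q).
Proof.
move=> [g [g0 ->]] [h [h0 ->]]; exists (fun i => g i + h i); split.
  by move=> i; rewrite addr_ge0.
by rewrite -big_split /=; apply: eq_bigr => i _; rewrite scalerDl.
Qed.

Lemma gamZ c a p : 0 <= a -> gam c p -> gam c (a *: p).
Proof.
move=> a0 [g [g0 ->]]; exists (fun i => a * g i); split.
  by move=> i; rewrite mulr_ge0.
by rewrite scaler_sumr; apply: eq_bigr => i _; rewrite scalerA.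
Qed.

Lemma gam_sum c (I : Type) (s : seq I) (P : pred I) (f : I -> {poly rat}) :
  (forall i, P i -> gam c (f i)) -> gam c (\sum_(i <- s | P i) f i).
Proof.
move=> H; elim/big_rec: _ => [|i x Pi Hx]; first exact: gam0.
exact: gamD (H _ Pi) Hx.
Qed.

Lemma gam1 : gam 0 1.
Proof.
exists (fun _ => 1); split => // ; by rewrite big_ord1 /= expr0 mulr1 scale1r.
Qed.

Lemma gamMX c p : gam c p -> gam c.+2 ('X * p).
Proof.
move=> [g [g0 ->]]; exists (fun i => if i is i'.+1 then g i' else 0); split.
  by case.
rewrite [RHS]big_ord_recl /= scale0r add0r mulr_sumr; apply: eq_bigr => i _.
rewrite /bump /= add1n -scalerAr exprS mulrA; congr (_ *: (_ * _)).
by congr (_ ^+ _); lia.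
Qed.

Lemma gamM1X c p : gam c p -> gam c.+1 ((1 + 'X) * p).
Proof.
move=> [g [g0 ->]].
exists (fun i => if (i <= c./2)%N then g i else 0); split.
  by move=> i; case: ifP.
rewrite mulr_sumr.
have Hle : ((c./2).+1 <= (c.+1./2).+1)%N.
  rewrite ltnS; case: (odd c) (odd_double_half c) => /= <-; lia.
rewrite (big_ord_widen _ (fun i : nat => (1 + 'X) * (g i *: ('X^i * (1 + 'X) ^+ (c - 2 * i)))) Hle) big_mkcond /=; apply: eq_bigr => i _.
case: ifP => hi; last by rewrite ifF ?scale0r //; apply/negbTE; rewrite -ltnNge.
rewrite ifT // -scalerAr mulrCA -exprS; congr (_ *: (_ * _ ^+ _)).
have := odd_double_half c; lia.
Qed.

Definition gamB (c : nat) (p : {poly rat}) : Prop :=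
  if c is c'.+1 then gam c' p else p = 0.

Lemma gamB0 c : gamB c 0.
Proof. by case: c => [|c] //=; apply: gam0. Qed.

Lemma gamBD c p q : gamB c p -> gamB c q -> gamB c (p + q).
Proof. by case: c => [|c] /= ; [move=> -> ->; rewrite addr0 | apply: gamD]. Qed.

Lemma gamB_sum c (I : Type) (s : seq I) (P : pred I) (f : I -> {poly rat}) :
  (forall i, P i -> gamB c (f i)) -> gamB c (\sum_(i <- s | P i) f i).
Proof.
move=> H; elim/big_rec: _ => [|i x Pi Hx]; first exact: gamB0.
exact: gamBD (H _ Pi) Hx.
Qed.

Lemma gamB_1X c p : gamB c p -> gam c ((1 + 'X) * p).
Proof. by case: c => [|c] /= ; [move=> ->; rewrite mulr0; apply: gam0 | apply: gamM1X]. Qed.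

Lemma gamB_X c p : gamB c p -> gam c.+1 ('X * p).
Proof. by case: c => [|c] /= ; [move=> ->; rewrite mulr0; apply: gam0 | apply: gamMX]. Qed.

Lemma gamM1X' c p : gam c p -> gam c.+1 ((1 + 'X) * p).
Proof. exact: gamM1X. Qed.

Lemma rev_tail (f : nat -> {poly rat}) m j : (j <= m)%N ->
  \sum_((m - j)%N <= i < m) f i = \sum_(0 <= i < j) f (m.-1 - i)%N.
Proof.
elim: j => [|j IH] hj; first by rewrite subn0 !big_geq.
rewrite big_nat_recr //= -IH; last by lia.
rewrite (@big_ltn _ _ _ (m - j.+1)); last by lia.
rewrite addrC; congr (_ + _); first by congr f; lia.
by congr (\sum_(_ <= _ < _) _); lia.
Qed.

Lemma rev_range (f : nat -> {poly rat}) m lo hi : (lo + hi = m)%N ->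
  \sum_(lo <= i < hi) f i = \sum_(lo <= i < hi) f (m.-1 - i)%N.
Proof.
move=> hm; rewrite big_nat_rev; apply: eq_big_nat => i hi'; congr f; lia.
Qed.

Section Step.
Variables (m c : nat) (W A B : nat -> {poly rat}).
Hypothesis Hinv : forall j, (j < m)%N -> [/\ gam c (A j), gamB c (B j),
  A (m.-1 - j)%N = A j /\ B (m.-1 - j)%N = B j,
  ((2 * j).+1 = m -> B j = 0) &
  W j = A j + (if ((2 * j).+1 < m)%N then B j else 'X * B j)].

Lemma Wsym i : (i < m)%N -> W i + W (m.-1 - i)%N = A i + A i + (1 + 'X) * B i.
Proof.
move=> hi; have [gA gB [sA sB] mB ->] := Hinv hi.
have hi' : (m.-1 - i < m)%N by lia.
have [_ _ _ _ ->] := Hinv hi'.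
rewrite sA sB.
case: (ltngtP (2 * i).+1 m) => h.
- by rewrite ifF; [ring | apply/negbTE; lia].
- by rewrite ifT; [ring | lia].
- by rewrite mB // ifF; [ring | apply/negbTE; lia].
Qed.

Lemma gam_range lo hi : (lo + hi = m)%N -> gam c (\sum_(lo <= i < hi) W i).
Proof.
move=> hm.
have -> : \sum_(lo <= i < hi) W i =
   (2%:R^-1 : rat) *: \sum_(lo <= i < hi) (A i + A i + (1 + 'X) * B i).
  have -> : \sum_(lo <= i < hi) (A i + A i + (1 + 'X) * B i) =
            \sum_(lo <= i < hi) (W i + W (m.-1 - i)%N).
    by apply: eq_big_nat => i hi'; rewrite Wsym //; lia.
  rewrite big_split /= -rev_range // -[X in _ = _ *: X]mulr2n -scaler_nat scalerA.
  by rewrite mulVf ?scale1r // pnatr_eq0.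
apply: gamZ; first by rewrite invr_ge0 ler0n.
rewrite big_nat_cond; apply: gam_sum => i /andP [/andP [_ hi'] _].
have him : (i < m)%N by lia.
have [gA gB _ _ _] := Hinv him.
by apply: gamD; [apply: gamD | apply: gamB_1X].
Qed.

End Step.

Section Step2.
Variables (m c : nat) (W A B : nat -> {poly rat}).
Hypothesis Hinv : forall j, (j < m)%N -> [/\ gam c (A j), gamB c (B j),
  A (m.-1 - j)%N = A j /\ B (m.-1 - j)%N = B j,
  ((2 * j).+1 = m -> B j = 0) &
  W j = A j + (if ((2 * j).+1 < m)%N then B j else 'X * B j)].

Let alpha j := \sum_(0 <= i < j) A i.
Let beta j := \sum_(0 <= i < j) B i.

Lemma S1 j : ((2 * j).+1 <= m)%N -> \sum_(0 <= i < j) W i = alpha j + beta j.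
Proof.
move=> hj; rewrite /alpha /beta -big_split /=; apply: eq_big_nat => i hi.
have him : (i < m)%N by lia.
by have [_ _ _ _ ->] := Hinv him; rewrite ifT //; lia.
Qed.

Lemma S2 j : ((2 * j).+1 <= m)%N ->
  \sum_((m - j)%N <= i < m) W i = alpha j + 'X * beta j.
Proof.
move=> hj; rewrite rev_tail; last by lia.
rewrite /alpha /beta mulr_sumr -big_split /=; apply: eq_big_nat => i hi.
have him : (i < m)%N by lia.
have him' : (m.-1 - i < m)%N by lia.
have [_ _ [sA sB] _ _] := Hinv him.
have [_ _ _ _ ->] := Hinv him'.
by rewrite ifF ?sA ?sB //; apply/negbTE; lia.
Qed.

Lemma Split j : ((2 * j).+1 <= m)%N ->
  \sum_(0 <= i < m) W i =
  (alpha j + beta j) + \sum_(j <= i < m - j) W i + (alpha j + 'X * beta j).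
Proof.
move=> hj; rewrite -S1 // -S2 //.
rewrite -(@big_cat_nat _ _ _ j) //=; last by lia.
rewrite -(@big_cat_nat _ _ _ (m - j)) //=; lia.
Qed.

Lemma Mid j : ((2 * j).+1 < m)%N ->
  \sum_(j <= i < m - j) W i =
  (A j + B j) + \sum_(j.+1 <= i < m.-1 - j) W i + (A j + 'X * B j).
Proof.
move=> hj.
have hjm : (j < m)%N by lia.
have hj' : (m.-1 - j < m)%N by lia.
have [_ _ [sA sB] _ Wj] := Hinv hjm.
have [_ _ _ _ Wj'] := Hinv hj'.
rewrite big_ltn; last by lia.
have -> : (m - j = (m.-1 - j).+1)%N by lia.
rewrite big_nat_recr /=; last by lia.
rewrite Wj Wj' sA sB ifT // ifF ?addrA //; apply/negbTE; lia.
Qed.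

Lemma Mid' j : ((2 * j).+1 = m)%N -> \sum_(j <= i < m - j) W i = A j.
Proof.
move=> hj.
have hjm : (j < m)%N by lia.
have [_ _ _ mB Wj] := Hinv hjm.
have -> : (m - j = j.+1)%N by lia.
rewrite big_nat1 Wj mB // ifF ?mulr0 ?addr0 //; apply/negbTE; lia.
Qed.

Lemma gam_alpha j : (j <= m)%N -> gam c (alpha j).
Proof.
move=> hj; rewrite /alpha big_nat_cond; apply: gam_sum => i /andP [/andP [_ hi] _].
have him : (i < m)%N by lia.
by have [] := Hinv him.
Qed.

Lemma gam_beta j : (j <= m)%N -> gamB c (beta j).
Proof.
move=> hj; rewrite /beta big_nat_cond; apply: gamB_sum => i /andP [/andP [_ hi] _].
have him : (i < m)%N by lia.
by have [] := Hinv him.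
Qed.

Definition Wn t := \sum_(t <= s < m) W s + 'X * \sum_(0 <= s < t.+1) W s.

Lemma step : exists A' B' : nat -> {poly rat}, forall j, (j < m)%N ->
  [/\ gam c.+1 (A' j), gamB c.+1 (B' j),
  A' (m.-1 - j)%N = A' j /\ B' (m.-1 - j)%N = B' j,
  ((2 * j).+1 = m -> B' j = 0) &
  Wn j = A' j + (if ((2 * j).+1 < m)%N then B' j else 'X * B' j)].
Proof.
pose A' j := let k := minn j (m.-1 - j) in
  (1 + 'X) * (A k + alpha k) + 'X * (B k + beta k + beta k).
pose B' j := let k := minn j (m.-1 - j) in \sum_(k <= i < m - k) W i - A k.
exists A', B' => j hj.
have symk : minn (m.-1 - j) (m.-1 - (m.-1 - j)) = minn j (m.-1 - j).
  by rewrite minnC; congr minn; lia.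
set k := minn j (m.-1 - j).
have hk : ((2 * k).+1 <= m)%N by rewrite /k; lia.
have hkm : (k < m)%N by lia.
have [gA gB [sA sB] mB Wk] := Hinv hkm.
have gM : gam c (\sum_(k <= i < m - k) W i - A k).
  case: (ltngtP (2 * k).+1 m) => hk2; last first.
  - by rewrite Mid' // subrr; apply: gam0.
  - lia.
  rewrite Mid //; set M := \sum_(k.+1 <= i < m.-1 - k) W i.
  have -> : A k + B k + M + (A k + 'X * B k) - A k
     = A k + (1 + 'X) * B k + M by ring.
  apply: gamD; first by apply: gamD => //; apply: gamB_1X.
  by apply: (gam_range Hinv); lia.
split.
- rewrite /A' /= -/k; apply: gamD.
    by apply: gamM1X; apply: gamD => //; apply: gam_alpha; lia.
  apply: gamB_X; apply: gamBD; first apply: gamBD => //; apply: gam_beta; lia.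
- by rewrite /B' /= -/k.
- by rewrite /A' /B' /= symk.
- move=> hm; rewrite /B' /= -/k.
  have -> : k = j by rewrite /k; lia.
  by rewrite Mid' // subrr.
rewrite /Wn /A' /B' /= -/k.
have hjm : (j < m)%N by lia.
have [_ _ _ mBj Wj] := Hinv hjm.
case: (leqP (2 * j).+1 m) => hj2.
  have kj : k = j by rewrite /k; lia.
  rewrite kj in Wk mB sA sB hk hkm gM *.
  rewrite (@big_cat_nat _ _ _ (m - j)) /=; [|lia|lia].
  rewrite S2 // big_nat_recr //= S1 //.
  case: (ltngtP (2 * j).+1 m) => h2; last first.
  - rewrite Mid' // Wj mBj // mulr0 if_same; ring.
  - lia.
  rewrite Wj ifT //.
  set M := \sum_(j <= i < m - j) W i; ring.
have kj : k = (m.-1 - j)%N by rewrite /k; lia.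
have jk : j = (m.-1 - k)%N by lia.
rewrite ifF; last by apply/negbTE; lia.
rewrite big_ltn; last by lia.
have -> : j.+1 = (m - k)%N by lia.
rewrite S2 // (@big_cat_nat _ _ _ k) /=; [|lia|lia].
rewrite S1 // jk.
have hmk : (m.-1 - k < m)%N by lia.
have [_ _ _ _ ->] := Hinv hmk.
rewrite ifF; last by apply/negbTE; lia.
rewrite sA sB Mid; last by lia.

set M := \sum_(k.+1 <= i < m.-1 - k) W i; ring.
Qed.
End Step2.
Section Arith.
Local Open Scope nat_scope.
Variable r : nat.
Hypothesis hr : 2 <= r.

Definition q n k j := (k * (r.-1 * r ^ j)) %/ r ^ n.
Definition hn n k := k - \sum_(j < n) q n k j.
Definition st n k := (k * r.-1) %/ r ^ n.
Definition good k := ~~ (r %| k).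

Lemma r_gt0 : 0 < r. Proof. lia. Qed.
Lemma rn_gt0 n : 0 < r ^ n. Proof. by rewrite expn_gt0 r_gt0. Qed.

Lemma divn_uniq X qq D rem : 0 < D -> X = qq * D + rem -> rem < D -> X %/ D = qq.
Proof. by move=> D0 -> hr'; rewrite divnMDl // divn_small // addn0. Qed.

Lemma geo n : \sum_(j < n) r.-1 * r ^ j = r ^ n - 1.
Proof.
elim: n => [|n IH]; first by rewrite big_ord0 expn0.
rewrite big_ord_recr /= IH expnS.
have := rn_gt0 n; set R := r ^ n => hR.
have : r = r.-1.+1 by lia.
move: (r.-1) => p ->; nia.
Qed.

Lemma sumq_le n k : \sum_(j < n) q n k j <= k.
Proof.
rewrite -(@leq_pmul2r (r ^ n)) ?rn_gt0 // big_distrl /=.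
apply: (@leq_trans (\sum_(j < n) k * (r.-1 * r ^ j))).
  by apply: leq_sum => j _; rewrite /q leq_trunc_div.
rewrite -big_distrr /= geo leq_mul2l; apply/orP; right; lia.
Qed.

Lemma st_lt n a : a < r ^ n -> st n a < r.-1.
Proof.
move=> ha; rewrite /st ltn_divLR ?rn_gt0 // mulnC ltn_pmul2l //; lia.
Qed.

Lemma stK n a d : a < r ^ n -> d < r ->
  st n.+1 (a + d * r ^ n) = if d <= st n a then d else d.-1.
Proof.
move=> ha hd.
have hR := rn_gt0 n.
have hs := st_lt ha.
rewrite /st in hs *; rewrite expnSr.
have hq := divn_eq (a * r.-1) (r ^ n).
have he := ltn_pmod (a * r.-1) hR.
move: ((a * r.-1) %/ r ^ n) ((a * r.-1) %% r ^ n) hs hq he => s e hs hae he.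
move: (r ^ n) hR ha he hae => R hR ha he hae.
have Er : r = r.-1.+1 by lia.
move: (r.-1) hs hae Er => p hs hae Er; rewrite Er in hd *.
case: leqP => hds.
  have [u Eu] : exists u, s = d + u by exists (s - d); lia.
  subst s.
  apply: (@divn_uniq _ _ _ (u * R + e)); [nia|nia|].
  have : u.+1 * R <= p * R by rewrite leq_mul2r; apply/orP; right; lia.
  nia.
have [v Ev] : exists v, d = s.+1 + v by exists (d - s.+1); lia.
subst d.
have [w Ew] : exists w, p = v + w by exists (p - v); lia.
subst p.
apply: (@divn_uniq _ _ _ (w * R + e)); [nia|simpl; nia|].
have : w * R <= (v + w) * R by rewrite leq_mul2r; apply/orP; right; lia.
nia.
Qed.
Lemma qS n a d j :
  q n.+1 (a + d * r ^ n) j.+1 = q n a j + d * (r.-1 * r ^ j).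
Proof.
rewrite /q !expnSr mulnA mulnA divnMr ?r_gt0 // -mulnA mulnDl.
rewrite addnC -mulnA (mulnC (r ^ n)) mulnA divnMDl ?rn_gt0 //; apply: addnC.
Qed.

Lemma q0 n k : q n k 0 = st n k.
Proof. by rewrite /q /st expn0 muln1. Qed.

Lemma hnS n a d : a < r ^ n -> d < r ->
  hn n.+1 (a + d * r ^ n) = hn n a + (d - st n.+1 (a + d * r ^ n)).
Proof.
move=> ha hd.
rewrite /hn big_ord_recl /= q0.
have -> : \sum_(i < n) q n.+1 (a + d * r ^ n) (bump 0 i) =
          \sum_(i < n) q n a i + d * (r ^ n - 1).
  rewrite -geo big_distrr /= -big_split /=.
  by apply: eq_bigr => i _; rewrite /bump /= add1n qS.
have hsum := sumq_le n a.
have hst : st n.+1 (a + d * r ^ n) <= d by rewrite stK //; case: ifP => _; lia.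
have hR := rn_gt0 n.
move: (st n.+1 _) hst => s hs.
move: (\sum_(i < n) q n a i) hsum => Q hQ.
move: (r ^ n) hR ha => R hR ha.
have -> : d * R = d * (R - 1) + d by rewrite -mulnSr; congr (_ * _); lia.
lia.
Qed.
End Arith.

Section Poly.
Variable r : nat.
Hypothesis hr : (2 <= r)%N.
Local Open Scope ring_scope.

Definition F n t : {poly rat} := \sum_(0%N <= k < r ^ n)
  (if good r k && (st r n k == t) then 'X^(hn r n k) else 0).

Lemma delta_range (v : {poly rat}) x lo hi :
  \sum_(lo <= s < hi) (if x == s then v else 0) = if (lo <= x < hi)%N then v else 0.
Proof.
elim: hi => [|hi IH]; first by rewrite big_geq // ltn0 andbF.
case: (leqP lo hi) => hl; last first.
  rewrite big_geq //; case: ifP => //; lia.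
rewrite big_nat_recr //= IH.
case: (eqVneq x hi) => [->|hx]; first by rewrite ltnn andbF add0r hl ltnSn.
rewrite addr0; congr (if _ then _ else _); by rewrite ltnS ltn_neqAle hx.
Qed.

Lemma partF n lo hi : \sum_(lo <= s < hi) F n s =
  \sum_(0%N <= k < r ^ n) (if good r k && (lo <= st r n k < hi)%N then 'X^(hn r n k) else 0).
Proof.
rewrite /F exchange_big_nat /=; apply: eq_bigr => k _.
case: (good r k) => /=; last by rewrite big1.
exact: delta_range.
Qed.

Lemma split_sum (R p : nat) (g : nat -> {poly rat}) :
  \sum_(0%N <= k < R * p) g k = \sum_(0%N <= d < p) \sum_(0%N <= a < R) g (a + d * R)%N.
Proof.
elim: p => [|p IH]; first by rewrite muln0 !big_geq.
rewrite big_nat_recr //= -IH mulnS addnC (@big_cat_nat _ _ _ (R * p)) //=; last lia.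
congr (_ + _).
rewrite -{1}(add0n (R * p)%N) big_addn (addKn (R * p)%N); apply: eq_bigr => a _.
by rewrite mulnC.
Qed.

Lemma good_shift n a d : (1 <= n)%N -> good r (a + d * r ^ n) = good r a.
Proof.
move=> hn; rewrite /good dvdn_addl //; apply: dvdn_mull.
by rewrite -{1}(expn1 r) dvdn_exp2l.
Qed.

Lemma inner (h s t : nat) : (s < r.-1)%N -> (t < r.-1)%N ->
  \sum_(0%N <= d < r) (if (if (d <= s)%N then d else d.-1) == t
       then 'X^(h + (d - (if (d <= s)%N then d else d.-1))) else 0 : {poly rat})
  = (if (t <= s)%N then 'X^h else 0) + (if (s <= t)%N then 'X^(h.+1) else 0).
Proof.
move=> hs ht.
rewrite (@big_cat_nat _ _ _ s.+1) //=; last lia.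
congr (_ + _).
  rewrite (@eq_big_nat _ _ _ _ _ _ (fun d => if t == d then 'X^h else 0)).
    by rewrite delta_range ltnS.
  move=> d /andP [_ hd]; rewrite ltnS in hd; rewrite hd subnn addn0 eq_sym //.
rewrite (@eq_big_nat _ _ _ _ _ _ (fun d => if t.+1 == d then 'X^(h.+1) else 0)).
  rewrite delta_range ltnS (_ : (t.+1 < r)%N) ?andbT //; lia.
move=> d /andP [hd1 hd2]; rewrite leqNgt hd1 /=.
have -> : (d - d.-1 = 1)%N by lia.
rewrite addn1; congr (if _ then _ else _).
apply/eqP/eqP; lia.
Qed.

Lemma FS n t : (1 <= n)%N -> (t < r.-1)%N ->
  F n.+1 t = \sum_(t <= s < r.-1) F n s + 'X * \sum_(0%N <= s < t.+1) F n s.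
Proof.
move=> hn1 ht; rewrite !partF {1}/F expnSr split_sum exchange_big_nat /=.
rewrite mulr_sumr -big_split /=; apply: eq_big_nat => a /andP [_ ha].
have hs := st_lt hr ha.
rewrite (@eq_big_nat _ _ _ _ _ _ (fun d => if good r a then
   (if (if (d <= st r n a)%N then d else d.-1) == t
       then 'X^(hn r n a + (d - (if (d <= st r n a)%N then d else d.-1))) else 0)
   else 0)); last first.
  move=> d /andP [_ hd]; rewrite good_shift // hnS // stK //.
  by case: (good r a).
case: (good r a) => /=; last by rewrite big1 // mulr0 addr0.
rewrite inner //; congr (_ + _).
  by rewrite hs andbT.
by rewrite ltnS; case: ifP => _; rewrite ?mulr0 // -exprS.
Qed.

Lemma F1 t : (t < r.-1)%N -> F 1 t = 'X.
Proof.
move=> ht; rewrite /F expn1.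
rewrite (@eq_big_nat _ _ _ _ _ _ (fun k => if t.+1 == k then 'X else 0)).
  by rewrite delta_range ifT //; lia.
move=> k /andP [_ hk].
case: (posnP k) => [->|hk0].
  by rewrite /good dvdn0.
have gk : good r k by rewrite /good; apply/negP => /dvdn_leq; lia.
have sk : st r 1 k = k.-1.
  rewrite /st expn1; apply: (@divn_uniq _ _ _ (r - k)); [lia| |lia].
  have [p Ep] : exists p, r = p.+1 by exists r.-1; lia.
  have [u Eu] : exists u, k = u.+1 by exists k.-1; lia.
  subst r k => /=; nia.
rewrite gk /= sk /hn big_ord1 q0 sk.
have -> : (k - k.-1 = 1)%N by lia.
by congr (if _ then _ else _); apply/eqP/eqP; lia.
Qed.
End Poly.

Section Main.
Variable r : nat.
Hypothesis hr : (2 <= r)%N.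
Local Open Scope ring_scope.

Definition InvW m c (W : nat -> {poly rat}) := exists A B : nat -> {poly rat},
  forall j, (j < m)%N -> [/\ gam c (A j), gamB c (B j),
  A (m.-1 - j)%N = A j /\ B (m.-1 - j)%N = B j,
  ((2 * j).+1 = m -> B j = 0) &
  W j = A j + (if ((2 * j).+1 < m)%N then B j else 'X * B j)].

Lemma invF c : exists W, (forall t, (t < r.-1)%N -> F r c.+1 t = 'X * W t)
  /\ InvW r.-1 c W.
Proof.
elim: c => [|c [W [FW [A [B Hinv]]]]].
  exists (fun _ => 1); split; first by move=> t ht; rewrite F1 // mulr1.
  exists (fun _ => 1), (fun _ => 0) => j hj; split => //.
  - exact: gam1.
  - by rewrite mulr0 if_same addr0.
have [A' [B' H']] := step Hinv.
exists (Wn r.-1 W); split; last by exists A', B'.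
move=> t ht; rewrite FS // /Wn.
rewrite (@eq_big_nat _ _ _ t _ _ (fun s => 'X * W s)); last first.
  by move=> s /andP [_ hs]; rewrite FW.
rewrite (@eq_big_nat _ _ _ 0 _ _ (fun s => 'X * W s)); last first.
  by move=> s /andP [_ hs]; rewrite FW //; lia.
by rewrite -!mulr_sumr mulrDr.
Qed.

Definition Ptot n : {poly rat} :=
  \sum_(0%N <= k < r ^ n) (if good r k then 'X^(hn r n k) else 0).

Lemma gamma_main n : (1 <= n)%N -> gam n.+1 (Ptot n).
Proof.
case: n => [//|c] _.
have [W [FW [A [B Hinv]]]] := invF c.
rewrite /Ptot.
have -> : \sum_(0%N <= k < r ^ c.+1) (if good r k then 'X^(hn r c.+1 k) else 0)
   = \sum_(0%N <= s < r.-1) F r c.+1 s.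
  rewrite (partF hr); apply: eq_big_nat => k /andP [_ hk].
  by have h := st_lt hr hk; case: (good r k) => //=; rewrite h.
rewrite (@eq_big_nat _ _ _ 0 (r.-1) _ (fun s => 'X * W s)); last first.
  by move=> s /andP [_ hs]; rewrite FW.
rewrite -mulr_sumr; apply: gamMX.
by apply: (gam_range Hinv).
Qed.
End Main.

Section Lattice.
Variables r n : nat.
Hypothesis hr : (2 <= r)%N.
Local Open Scope ring_scope.

Definition xk k : 'rV[int]_n.+1 := \row_(j < n.+1)
  (if unlift ord_max j is Some j' then - (q r n k j')%:Z else (hn r n k)%:Z).

Lemma xk_max k : xk k 0 ord_max = (hn r n k)%:Z.
Proof. by rewrite mxE unlift_none. Qed.
Lemma xk_lift k j : xk k 0 (lift ord_max j) = - (q r n k j)%:Z.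
Proof. by rewrite mxE liftK. Qed.
Lemma lp_max (v : 'rV[int]_n) : lift_pt v 0 ord_max = 1.
Proof. by rewrite mxE unlift_none. Qed.
Lemma lp_lift (v : 'rV[int]_n) j : lift_pt v 0 (lift ord_max j) = v 0 j.
Proof. by rewrite mxE liftK. Qed.

Definition cc (j : nat) : nat := (r.-1 * r ^ j)%N.

Definition comb (lam : 'I_n.+1 -> rat) :=
  \sum_(i < n.+1) lam i *: map_mx (fun a : int => a%:~R : rat) (lift_pt (Bvert r n i)).

Lemma comb_max lam : comb lam 0 ord_max = \sum_i lam i.
Proof.
rewrite /comb summxE; apply: eq_bigr => i _.
by rewrite !mxE unlift_none mulr1.
Qed.

Lemma comb_lift lam j : comb lam 0 (lift ord_max j) =
   - lam ord0 * (cc j)%:R + lam (lift ord0 j).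
Proof.
rewrite /comb summxE big_ord_recl; congr (_ + _).
  rewrite !mxE liftK /Bvert mxE eqxx /cc subn1 mulrNz pmulrn; ring.
rewrite (bigD1 j) //= big1 ?addr0.
  by rewrite !mxE liftK /Bvert mxE /= eqxx mulr1.
move=> i hij; rewrite !mxE liftK /Bvert mxE /= eqSS.
by rewrite (negbTE (_ : (i : nat) != j)) ?mulr0.
Qed.

Let Nr : rat := (r ^ n)%:R.
Lemma Nr_gt0 : 0 < Nr.
Proof. by rewrite /Nr ltr0n rn_gt0. Qed.

Lemma sum_cc : \sum_(j < n) ((cc j)%:R : rat) = Nr - 1.
Proof.
rewrite -natr_sum /cc (geo hr) natrB ?(rn_gt0 hr) //.
Qed.

Lemma frac01 a : (0 < a < r ^ n)%N -> 0 < a%:R / Nr < 1.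
Proof.
move=> /andP [h1 h2]; have hN := Nr_gt0.
apply/andP; split; first by apply: divr_gt0; rewrite // ltr0n. by rewrite ltr_pdivrMr // mul1r /Nr ltr_nat.
Qed.

Lemma e_pos k j : good r k -> (j < n)%N -> (0 < (k * cc j) %% r ^ n)%N.
Proof.
move=> gk hj; rewrite lt0n; apply/negP => hd0; have hd : (r ^ n %| k * cc j)%N := hd0.
have : (r ^ (n - j) * r ^ j %| (k * r.-1) * r ^ j)%N.
  by rewrite -expnD subnK ?(ltnW hj) // -mulnA.
rewrite dvdn_pmul2r ?(rn_gt0 hr) // => hd'.
have : (r %| k * r.-1)%N.
  apply: dvdn_trans hd'; rewrite -{1}(expn1 r) dvdn_exp2l //; lia.
rewrite mulnC Gauss_dvdr ?coprimenP ?(negbTE gk) //; lia.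
Qed.

Lemma e_eq k j : (((k * cc j) %% r ^ n)%:R : rat) =
   k%:R * (cc j)%:R - (q r n k j)%:R * Nr.
Proof.
have H : (k%:R * (cc j)%:R : rat) =
   ((k * cc j) %/ r ^ n)%:R * Nr + ((k * cc j) %% r ^ n)%:R.
  by rewrite /Nr -!natrM -natrD -divn_eq.
change (q r n k j) with ((k * cc j) %/ r ^ n)%N.
by rewrite H; ring.
Qed.

Lemma xk_pp k : (k < r ^ n)%N -> good r k -> in_open_pp (Bvert r n) (xk k).
Proof.
move=> hk gk.
have k0 : (0 < k)%N by case: k gk hk => //; rewrite /good dvdn0.
have NrNZ : Nr != 0 by rewrite lt0r_neq0 // Nr_gt0.
pose lam (i : 'I_n.+1) := if unlift ord0 i is Some j
   then ((k * cc j) %% r ^ n)%:R / Nr else k%:R / Nr.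
exists lam; split.
  move=> i; case: (unliftP ord0 i) => [j|] ->; rewrite /lam ?liftK ?unlift_none;
    apply: frac01; rewrite ?k0 ?hk //.
  by rewrite e_pos // ltn_pmod // (rn_gt0 hr).
change (map_mx (fun a : int => a%:~R : rat) (xk k) = comb lam).
apply/rowP => j; rewrite mxE.
case: (unliftP ord_max j) => [j'|] ->.
  rewrite xk_lift comb_lift /lam unlift_none liftK e_eq mulrNz pmulrn.
  by field; apply: NrNZ.
rewrite xk_max comb_max big_ord_recl /lam unlift_none pmulrn.
rewrite (eq_bigr (fun j : 'I_n => (k%:R * (cc j)%:R - (q r n k j)%:R * Nr) / Nr)); last first.
  by move=> j0 _; rewrite liftK e_eq.
rewrite -mulr_suml sumrB -mulr_sumr -mulr_suml sum_cc /hn.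
have intrn : forall m : nat, ((m%:Z)%:~R : rat) = m%:R by move=> m; rewrite pmulrn.
rewrite !intrn natrB ?(sumq_le hr) // natr_sum.
by field; apply: NrNZ.
Qed.

Lemma Posz_sum m (F : nat -> nat) :
  Posz (\sum_(j < m) F j)%N = \sum_(j < m) Posz (F j).
Proof. by elim: m => [|m IH]; rewrite ?big_ord0 // !big_ord_recr /= PoszD IH. Qed.

Lemma xk_inj k1 k2 : xk k1 = xk k2 -> k1 = k2.
Proof.
move=> E.
have h : hn r n k1 = hn r n k2.
  by have := congr1 (fun x : 'rV[int]_n.+1 => x 0 ord_max) E; rewrite /= !xk_max => -[].
have hq : forall j : 'I_n, q r n k1 j = q r n k2 j.
  move=> j; have := congr1 (fun x : 'rV[int]_n.+1 => x 0 (lift ord_max j)) E.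
  by rewrite /= !xk_lift => /oppr_inj [].
have hs : (\sum_(j < n) q r n k1 j = \sum_(j < n) q r n k2 j)%N.
  by apply: eq_bigr => j _; rewrite hq.
have := sumq_le hr n k1; have := sumq_le hr n k2.
move: h; rewrite /hn hs; lia.
Qed.

Lemma pp_xk x : (1 <= n)%N -> in_open_pp (Bvert r n) x ->
  exists k, [/\ (k < r ^ n)%N, good r k & x = xk k].
Proof.
move=> hn1 [lam [Hl E]].
have E' : map_mx (fun a : int => a%:~R : rat) x = comb lam := E.
have Ex j : ((x 0 (lift ord_max j))%:~R : rat) = - lam ord0 * (cc j)%:R + lam (lift ord0 j).
  by rewrite -comb_lift -E' mxE.
have Em : ((x 0 ord_max)%:~R : rat) = \sum_i lam i by rewrite -comb_max -E' mxE.
have [l0p l01] := andP (Hl ord0).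
pose kz : int := x 0 ord_max - \sum_(j < n) x 0 (lift ord_max j).
have Ek : (kz%:~R : rat) = lam ord0 * Nr.
  rewrite /kz intrB rmorph_sum /= Em (eq_bigr _ (fun j _ => Ex j)) big_ord_recl.
  rewrite big_split /= -mulr_sumr sum_cc; ring.
have hN := Nr_gt0.
have kz0 : 0 < kz by rewrite -(ltr0z rat) Ek mulr_gt0.
have kzN : kz < (r ^ n)%N.
  by rewrite -(ltr_int rat) Ek -pmulrn gtr_pMl.
pose k := `|kz|%N.
have kzk : kz = k%:Z by rewrite /k gez0_abs // ltW.
have intrn : forall m : nat, ((m%:Z)%:~R : rat) = m%:R by move=> m; rewrite pmulrn.
have Ekr : ((k%:Z)%:~R : rat) = lam ord0 * Nr by rewrite -kzk Ek.
have Hj : forall j : 'I_n, (x 0 (lift ord_max j) = - (q r n k j)%:Z) /\ (0 < (k * cc j) %% r ^ n)%N.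
  move=> j.
  set xj := x 0 (lift ord_max j).
  pose ez : int := xj * (r ^ n)%N%:Z + k%:Z * (cc j)%:Z.
  have Eez : (ez%:~R : rat) = Nr * lam (lift ord0 j).
    rewrite /ez intrD !intrM Ekr !intrn /xj Ex /Nr; ring.
  have [e0 eN] := andP (Hl (lift ord0 j)).
  have ez0 : 0 < ez by rewrite -(ltr0z rat) Eez mulr_gt0.
  have ezN : ez < (r ^ n)%N by rewrite -(ltr_int rat) Eez intrn mulrC gtr_pMl.
  have kc0 : 0 <= k%:Z * (cc j)%:Z by [].
  have R0 : 0 < (r ^ n)%N%:Z by rewrite ltz_nat (rn_gt0 hr).
  have xj0 : 0 <= - xj.
    move: ez0 ezN kc0 R0; rewrite /ez.
    nia.
  have Eeq : (k * cc j = `|- xj| * r ^ n + `|ez|)%N.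
    have : Posz (k * cc j)%N = Posz (`|- xj| * r ^ n + `|ez|)%N; last by case.
    rewrite PoszD (PoszM k) (PoszM `|- xj|%N) (gez0_abs xj0) (gez0_abs (ltW ez0)) /ez; ring.
  have hq : q r n k j = `|- xj|%N.
    apply: (divn_uniq (rn_gt0 hr n)) (Eeq) _.
    rewrite -ltz_nat gez0_abs ?(ltW ez0) //.
  split; first by rewrite hq gez0_abs // opprK.
  change ((k * cc j) %% r ^ n)%N with ((k * cc j) %% r ^ n)%N.
  rewrite Eeq modnMDl modn_small; last by rewrite -ltz_nat gez0_abs ?(ltW ez0).
  by rewrite -ltz_nat gez0_abs ?(ltW ez0).
exists k; split.
- by rewrite -ltz_nat -kzk.
- have hlt : (n.-1 < n)%N by rewrite ltn_predL.
  have [_ hpos] := Hj (Ordinal hlt).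
  apply/negP => /dvdnP [k' Ek'].
  move: hpos; rewrite /= Ek' /cc.
  have -> : (k' * r * (r.-1 * r ^ n.-1) = k' * r.-1 * r ^ n)%N.
    have Hn : (r ^ n = r * r ^ n.-1)%N by rewrite -expnS prednK.
    by rewrite Hn; ring.
  by rewrite modnMl.
apply/rowP => j; case: (unliftP ord_max j) => [j'|] ->.
  by rewrite xk_lift; case: (Hj j').
rewrite xk_max.
have -> : x 0 ord_max = kz + \sum_(j < n) x 0 (lift ord_max j) by rewrite /kz subrK.
rewrite (eq_bigr (fun j : 'I_n => - (q r n k j)%:Z)); last by move=> j1 _; case: (Hj j1).
rewrite sumrN -Posz_sum kzk /hn subzn //; exact: sumq_le.
Qed.
End Lattice.

Local Open Scope ring_scope.

Theorem corollary4p4 (r n : nat) (hr : (2 <= r)%N) (hn : (1 <= n)%N) :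
  (exists p : {poly rat}, lstar_is (Bvert r n) p) /\
  (forall p : {poly rat}, lstar_is (Bvert r n) p -> gamma_nonneg n p).
Proof.
pose kl := [seq k <- iota 0 (r ^ n) | good r k].
pose sK := map (xk r n) kl.
have memK : forall x, x \in sK <-> in_open_pp (Bvert r n) x.
  move=> x; split.
  - case/mapP => k; rewrite mem_filter mem_iota => /andP [gk /andP [_ hk]] ->.
    by apply: xk_pp => //; rewrite add0n in hk.
  - move/(pp_xk hr hn) => [k [hk gk ->]]; apply: map_f.
    by rewrite mem_filter mem_iota gk /= add0n.
have uK : uniq sK.
  rewrite map_inj_uniq; first by rewrite filter_uniq // iota_uniq.
  exact: xk_inj.
have sumK : \sum_(x <- sK) 'X^(absz (x 0 ord_max)) = Ptot r n.
  rewrite big_map big_filter /Ptot big_mkcond /index_iota subn0.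
  by apply: eq_bigr => k _; rewrite xk_max.
split.
  exists (Ptot r n), sK; split => //.
    by move=> x /mapP [k _ ->]; rewrite xk_max.
move=> p [s [us mem _ ->]].
have pe : perm_eq s sK.
  apply: uniq_perm => // x; apply/idP/idP => [/mem /memK|/memK /mem] //.
rewrite (perm_big _ pe) sumK.
have [g [g0 ->]] := gamma_main hr hn.
by exists (fun i => g i).
Qed.
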